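(* For every $n\ge1$ and every $(a_1,\dots,a_n)\in\mathbb R^n\setminus\{0\}$, the system $\dot x_i=x_i\big(\sum_{j>i}a_jx_j-\sum_{j<i}a_jx_j\big)$, $i=1,\dots,n$, admits $n-1$ functionally independent (rational) first integrals; hence it is superintegrable.
   Context: This system is the Hamiltonian vector field of $H=a_1x_1+\dots+a_nx_n$ with respect to the Poisson bracket on $\mathbb R^n$ given by $\{x_i,x_j\}=x_ix_j$ for $1\le i<j\le n$. Functional independence means the differentials are linearly independent on a dense open subset. *)

(* Defs.v *)
(* classical reals. Points of R^n are represented as
   x : nat -> R, of which only the coordinates 0..n-1 are used. *)
From Stdlib Require Import Reals.
Open Scope R_scope.

Fixpoint sum_upto (k : nat) (f : nat -> R) : R :=
  match k with
  | O => 0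
  | S k' => sum_upto k' f + f k'
  end.

Definition vf (n : nat) (a : nat -> R) (x : nat -> R) (i : nat) : R :=
  x i * (sum_upto n (fun j => if Nat.ltb i j then a j * x j else 0)
         - sum_upto i (fun j => a j * x j)).

(* Rational functions with real coefficients, as expressions. *)
Inductive rexpr : Type :=
| RVar : nat -> rexpr
| RConst : R -> rexpr
| RAdd : rexpr -> rexpr -> rexpr
| RMul : rexpr -> rexpr -> rexpr
| ROpp : rexpr -> rexpr
| RInv : rexpr -> rexpr.

Fixpoint reval (e : rexpr) (x : nat -> R) : R :=
  match e with
  | RVar i => x i
  | RConst c => c
  | RAdd e1 e2 => reval e1 x + reval e2 x
  | RMul e1 e2 => reval e1 x * reval e2 x
  | ROpp e1 => - reval e1 x
  | RInv e1 => / reval e1 x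
  end.

Fixpoint rdefined (e : rexpr) (x : nat -> R) : Prop :=
  match e with
  | RVar _ | RConst _ => True
  | RAdd e1 e2 | RMul e1 e2 => rdefined e1 x /\ rdefined e2 x
  | ROpp e1 => rdefined e1 x
  | RInv e1 => rdefined e1 x /\ reval e1 x <> 0
  end.

Fixpoint rvars_lt (n : nat) (e : rexpr) : Prop :=
  match e with
  | RVar i => (i < n)%nat
  | RConst _ => True
  | RAdd e1 e2 | RMul e1 e2 => rvars_lt n e1 /\ rvars_lt n e2
  | ROpp e1 | RInv e1 => rvars_lt n e1
  end.

Definition upd (x : nat -> R) (i : nat) (t : R) : nat -> R :=
  fun j => if Nat.eqb j i then t else x j.

Definition has_partial (F : (nat -> R) -> R) (x : nat -> R) (i : nat) (l : R) : Prop :=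
  derivable_pt_lim (fun t => F (upd x i t)) (x i) l.

Definition first_integral (n : nat) (a : nat -> R) (e : rexpr) : Prop :=
  forall x, rdefined e x ->
    exists d : nat -> R,
      (forall i, (i < n)%nat -> has_partial (reval e) x i (d i)) /\
      sum_upto n (fun i => d i * vf n a x i) = 0.

Definition open_n (n : nat) (U : (nat -> R) -> Prop) : Prop :=
  forall x, U x -> exists eps, eps > 0 /\
    forall y, (forall i, (i < n)%nat -> Rabs (y i - x i) < eps) -> U y.

Definition dense_n (n : nat) (U : (nat -> R) -> Prop) : Prop :=
  forall x eps, eps > 0 -> exists y, U y /\
    forall i, (i < n)%nat -> Rabs (y i - x i) < eps.

Definition indep_at (n m : nat) (F : nat -> rexpr) (x : nat -> R) : Prop :=
  (forall k, (k < m)%nat -> rdefined (F k) x) /\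
  exists D : nat -> nat -> R,
    (forall k i, (k < m)%nat -> (i < n)%nat -> has_partial (reval (F k)) x i (D k i)) /\
    forall c : nat -> R,
      (forall i, (i < n)%nat -> sum_upto m (fun k => c k * D k i) = 0) ->
      forall k, (k < m)%nat -> c k = 0.

Definition functionally_independent (n m : nat) (F : nat -> rexpr) : Prop :=
  exists U : (nat -> R) -> Prop,
    open_n n U /\ dense_n n U /\ forall x, U x -> indep_at n m F x.

(* Main.v *)
Require Import Defs.
From Stdlib Require Import Reals Lra Lia FunctionalExtensionality.
Open Scope R_scope.

Fixpoint rder (i : nat) (e : rexpr) : rexpr :=
  match e with
  | RVar j => if Nat.eqb j i then RConst 1 else RConst 0
  | RConst _ => RConst 0
  | RAdd e1 e2 => RAdd (rder i e1) (rder i e2)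
  | RMul e1 e2 => RAdd (RMul (rder i e1) e2) (RMul e1 (rder i e2))
  | ROpp e1 => ROpp (rder i e1)
  | RInv e1 => RMul (ROpp (rder i e1)) (RInv (RMul e1 e1))
  end.

Lemma upd_same x i : upd x i (x i) = x.
Proof. apply functional_extensionality; intro j; unfold upd; destruct (Nat.eqb_spec j i); subst; auto. Qed.

Lemma dpl_ext f g x l : (forall t, f t = g t) -> derivable_pt_lim f x l -> derivable_pt_lim g x l.
Proof. intros H D. assert (f = g) by (apply functional_extensionality; auto). subst; auto. Qed.

Lemma rder_ok e x i : rdefined e x ->
  derivable_pt_lim (fun t => reval e (upd x i t)) (x i) (reval (rder i e) x).
Proof.
  induction e; simpl; intros Hd.
  - unfold upd. destruct (Nat.eqb_spec n i); simpl.
    + apply (dpl_ext id); [intro; reflexivity|]. apply derivable_pt_lim_id.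
    + apply (dpl_ext (fct_cte (x n))); [intro; reflexivity|]. apply derivable_pt_lim_const.
  - apply (dpl_ext (fct_cte r)); [intro; reflexivity|]. apply derivable_pt_lim_const.
  - destruct Hd. apply derivable_pt_lim_plus; auto.
  - destruct Hd as [H1 H2].
    pose proof (derivable_pt_lim_mult _ _ _ _ _ (IHe1 H1) (IHe2 H2)) as H.
    cbv beta in H. rewrite upd_same in H. exact H.
  - apply (derivable_pt_lim_opp _ _ _ (IHe Hd)).
  - destruct Hd as [H1 H2].
    pose proof (derivable_pt_lim_div _ _ _ _ _ (derivable_pt_lim_const 1 (x i)) (IHe H1)) as H.
    unfold fct_cte in H. cbv beta in H. rewrite upd_same in H. specialize (H H2).
    apply (dpl_ext _ _ _ _ (fun t => eq_refl)) in H.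
    eapply dpl_ext; [|replace (- reval (rder i e) x * / (reval e x * reval e x)) with
      ((0 * reval e x - reval (rder i e) x * 1) / (reval e x)²) by (unfold Rsqr; field; auto); exact H].
    intro t. unfold div_fct, fct_cte, Rdiv. ring.
Qed.

Lemma sum_ext k f g : (forall l, (l < k)%nat -> f l = g l) -> sum_upto k f = sum_upto k g.
Proof. induction k; simpl; intros H; auto. rewrite IHk, H; auto. Qed.

Lemma sum_plus k f g : sum_upto k (fun l => f l + g l) = sum_upto k f + sum_upto k g.
Proof. induction k; simpl; [ring|]. rewrite IHk; ring. Qed.

Lemma sum_scal k c f : sum_upto k (fun l => c * f l) = c * sum_upto k f.
Proof. induction k; simpl; [ring|]. rewrite IHk; ring. Qed.

Lemma sum_zero k f : (forall l, (l < k)%nat -> f l = 0) -> sum_upto k f = 0.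
Proof. induction k; simpl; intros H; auto. rewrite IHk, H; auto; ring. Qed.

Lemma sum_single k f p : (p < k)%nat -> (forall l, (l < k)%nat -> l <> p -> f l = 0) -> sum_upto k f = f p.
Proof.
  induction k; simpl; intros Hp H; [lia|].
  destruct (Nat.eq_dec p k).
  - subst. rewrite sum_zero; [ring|]. intros l Hl; apply H; lia.
  - rewrite IHk; [|lia|intros; apply H; lia]. rewrite (H k); [ring|lia|auto].
Qed.

Lemma sum_opp k f : sum_upto k (fun l => - f l) = - sum_upto k f.
Proof. induction k; simpl; [ring|]. rewrite IHk; ring. Qed.

Lemma sum_swap n m (F : nat -> nat -> R) :
  sum_upto n (fun i => sum_upto m (fun k => F k i)) = sum_upto m (fun k => sum_upto n (fun i => F k i)).
Proof.
  induction n; simpl.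
  - rewrite sum_zero; auto.
  - rewrite IHn. rewrite <- sum_plus. reflexivity.
Qed.

Definition lie (n : nat) (V : nat -> R) (e : rexpr) (x : nat -> R) : R :=
  sum_upto n (fun i => reval (rder i e) x * V i).

Lemma lie_add n V e1 e2 x : lie n V (RAdd e1 e2) x = lie n V e1 x + lie n V e2 x.
Proof. unfold lie; simpl. rewrite <- sum_plus. apply sum_ext; intros; ring. Qed.

Lemma lie_mul n V e1 e2 x : lie n V (RMul e1 e2) x = lie n V e1 x * reval e2 x + reval e1 x * lie n V e2 x.
Proof. unfold lie; simpl. rewrite (Rmult_comm _ (reval e2 x)), <- sum_scal, <- sum_scal, <- sum_plus. apply sum_ext; intros; ring. Qed.

Lemma lie_opp n V e x : lie n V (ROpp e) x = - lie n V e x.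
Proof. unfold lie; simpl. rewrite <- sum_opp. apply sum_ext; intros; ring. Qed.

Lemma lie_const n V r x : lie n V (RConst r) x = 0.
Proof. unfold lie; simpl. apply sum_zero; intros; ring. Qed.

Lemma lie_inv n V e x : lie n V (RInv e) x = - lie n V e x * / (reval e x * reval e x).
Proof. unfold lie; simpl.
  replace (- sum_upto n (fun i => reval (rder i e) x * V i) * / (reval e x * reval e x))
   with (sum_upto n (fun i => (- / (reval e x * reval e x)) * (reval (rder i e) x * V i))) by (rewrite sum_scal; ring).
  apply sum_ext; intros; ring. Qed.

Lemma lie_var n V j x : (j < n)%nat -> lie n V (RVar j) x = V j.
Proof. intros Hj. unfold lie; simpl. rewrite (sum_single _ _ j); auto.
  - rewrite Nat.eqb_refl; simpl; ring.
  - intros l _ Hl. destruct (Nat.eqb_spec j l); [lia|]. simpl; ring. Qed.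

Definition ej (j : nat) : nat -> R := fun i => if Nat.eqb i j then 1 else 0.

Lemma lie_ej n e x j : (j < n)%nat -> lie n (ej j) e x = reval (rder j e) x.
Proof. intros Hj. unfold lie, ej. rewrite (sum_single _ _ j); auto.
  - rewrite Nat.eqb_refl; ring.
  - intros l _ Hl. destruct (Nat.eqb_spec l j); [lia|]. ring. Qed.

Fixpoint lin (a : nat -> R) (lo hi : nat) : rexpr :=
  match hi with
  | O => RConst 0
  | S h => RAdd (lin a lo h) (if Nat.leb lo h then RMul (RConst (a h)) (RVar h) else RConst 0)
  end.

Lemma reval_lin a lo hi x : reval (lin a lo hi) x = sum_upto hi (fun l => if Nat.leb lo l then a l * x l else 0).
Proof. induction hi; simpl; auto. rewrite IHhi. destruct (Nat.leb lo hi); simpl; ring. Qed.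

Lemma lie_lin n V a lo hi x : (hi <= n)%nat ->
  lie n V (lin a lo hi) x = sum_upto hi (fun l => if Nat.leb lo l then a l * V l else 0).
Proof. induction hi; simpl; intros H. apply lie_const.
  rewrite lie_add, IHhi by lia. destruct (Nat.leb lo hi).
  - rewrite lie_mul, lie_const, lie_var by lia. simpl. ring.
  - rewrite lie_const; ring. Qed.

Lemma rdefined_lin a lo hi x : rdefined (lin a lo hi) x.
Proof. induction hi; simpl; auto. split; auto. destruct (Nat.leb lo hi); simpl; auto. Qed.

Lemma rvars_lin n a lo hi : (hi <= n)%nat -> rvars_lt n (lin a lo hi).
Proof. induction hi; simpl; intros; auto. split; [apply IHhi; lia|]. destruct (Nat.leb lo hi); simpl; auto; split; auto; lia. Qed.

Definition Px (a x : nat -> R) (j : nat) : R := sum_upto j (fun l => a l * x l).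
Definition Sx (n : nat) (a x : nat -> R) (j : nat) : R :=
  sum_upto n (fun l => if Nat.leb j l then a l * x l else 0).

Lemma ind_split m lo f :
  sum_upto m (fun l => if Nat.leb lo l then f l else 0) =
  sum_upto m (fun l => if Nat.leb (S lo) l then f l else 0) + (if Nat.ltb lo m then f lo else 0).
Proof.
  induction m. { cbn [sum_upto]. destruct (Nat.ltb_spec lo 0); [lia|ring]. }
  cbn [sum_upto]. rewrite IHm.
  destruct (Nat.leb_spec lo m); destruct (Nat.leb_spec (S lo) m);
  destruct (Nat.ltb_spec lo m); destruct (Nat.ltb_spec lo (S m)); try lia; try ring.
  all: assert (lo = m) by lia; subst; ring.
Qed.

Lemma S_step n a x j : (j < n)%nat -> Sx n a x j = a j * x j + Sx n a x (S j).
Proof. intros H. unfold Sx. rewrite ind_split. destruct (Nat.ltb_spec j n); [ring|lia]. Qed.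

Lemma S_beyond n a x M j : (forall l, (M < l < n)%nat -> a l = 0) -> (M < j)%nat -> Sx n a x j = 0.
Proof. intros Ha Hj. unfold Sx. apply sum_zero. intros l Hl.
  destruct (Nat.leb_spec j l); [rewrite Ha by lia; ring|auto]. Qed.

Lemma S_ge n a x j : (n <= j)%nat -> Sx n a x j = 0.
Proof. intros Hj. unfold Sx. apply sum_zero. intros l Hl.
  destruct (Nat.leb_spec j l); [lia|auto]. Qed.

Lemma PS n a x j : (j <= n)%nat -> Px a x j + Sx n a x j = Px a x n.
Proof.
  intros Hj. remember (n - j)%nat as d. revert j Hj Heqd. induction d; intros j Hj Hd.
  - assert (j = n) by lia. subst. rewrite S_ge by lia. ring.
  - rewrite S_step by lia. rewrite <- (IHd (S j)) by lia. unfold Px; simpl. ring.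
Qed.

Lemma vf_eq n a x k : vf n a x k = x k * (Sx n a x (S k) - Px a x k).
Proof. reflexivity. Qed.

Lemma lie_vf_var n a x k : (k < n)%nat -> lie n (vf n a x) (RVar k) x = x k * (Sx n a x (S k) - Px a x k).
Proof. intros; rewrite lie_var; auto. Qed.

Lemma lie_vf_lin n a x lo : lie n (vf n a x) (lin a lo n) x = - Px a x lo * Sx n a x lo.
Proof.
  rewrite lie_lin by lia.
  remember (n - lo)%nat as d. revert lo Heqd. induction d; intros lo Hd.
  - rewrite S_ge by lia. rewrite sum_zero; [ring|]. intros l Hl. destruct (Nat.leb_spec lo l); [lia|auto].
  - rewrite ind_split. rewrite IHd by lia. destruct (Nat.ltb_spec lo n); [|lia].
    rewrite vf_eq, (S_step n a x lo) by lia. unfold Px; simpl. ring.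
Qed.

Lemma lie_x_var n x k : (k < n)%nat -> lie n x (RVar k) x = x k.
Proof. intros; rewrite lie_var; auto. Qed.

Lemma lie_x_lin n a x lo : lie n x (lin a lo n) x = Sx n a x lo.
Proof. rewrite lie_lin by lia. reflexivity. Qed.

Lemma lie_ej_var n x k j : (k < n)%nat -> lie n (ej j) (RVar k) x = if Nat.eqb k j then 1 else 0.
Proof. intros; rewrite lie_var; auto. Qed.

Lemma lie_ej_lin n a x lo j : (j < n)%nat -> lie n (ej j) (lin a lo n) x = if Nat.leb lo j then a j else 0.
Proof. intros Hj. rewrite lie_lin by lia. rewrite (sum_single _ _ j); auto.
  - unfold ej. rewrite Nat.eqb_refl. destruct (Nat.leb lo j); ring.
  - intros l _ Hl. unfold ej. destruct (Nat.eqb_spec l j); [lia|]. destruct (Nat.leb lo l); ring.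
Qed.

Lemma reval_linS n a lo x : reval (lin a lo n) x = Sx n a x lo.
Proof. rewrite reval_lin; reflexivity. Qed.

Definition Hx n a := lin a 0 n.
Definition Rat (c : nat) := RMul (RVar c) (RInv (RVar (S c))).
Definition Up n a c := RMul (RMul (RVar c) (lin a (S (S c)) n)) (RInv (RMul (lin a c n) (RVar (S c)))).
Definition Gx n a M := RMul (RMul (RVar (n-1)) (RVar (M-1))) (RInv (RMul (lin a (M-1) n) (lin a M n))).
Definition Fcol n a M c :=
  if Nat.leb (S (S c)) M then Up n a c else if Nat.leb (S (S c)) n then Rat c else Gx n a M.
Definition valid n M c := (c < n)%nat /\ ((S (S c) <= M)%nat \/ ((M < c)%nat /\ ((S (S c) <= n)%nat \/ (1 <= M)%nat))).

Ltac dec := repeat match goal with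
 | |- context [Nat.eqb ?a ?b] => destruct (Nat.eqb_spec a b); try lia
 | |- context [Nat.leb ?a ?b] => destruct (Nat.leb_spec a b); try lia end.

Lemma nz_l a b : a * b <> 0 -> a <> 0.
Proof. intros H E; apply H; rewrite E; ring. Qed.
Lemma nz_r a b : a * b <> 0 -> b <> 0.
Proof. intros H E; apply H; rewrite E; ring. Qed.

Lemma mult_nz a b : a <> 0 -> b <> 0 -> a * b <> 0.
Proof. intros; apply Rmult_integral_contrapositive; auto. Qed.

Lemma Px_S a x j : Px a x (S j) = Px a x j + a j * x j.
Proof. reflexivity. Qed.


Lemma FI_col n a M x c : (M < n)%nat -> (forall l, (M < l < n)%nat -> a l = 0) ->
  valid n M c -> rdefined (Fcol n a M c) x -> lie n (vf n a x) (Fcol n a M c) x = 0.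
Proof.
  intros HMn Ha [Hc Hv] Hd. unfold Fcol in *.
  destruct (Nat.leb_spec (S (S c)) M).
  - unfold Up in *. cbn [rdefined reval] in Hd. destruct Hd as [_ [_ Hd]]. rewrite !reval_linS in Hd.
    pose proof (nz_l _ _ Hd). pose proof (nz_r _ _ Hd).
    rewrite !lie_mul, lie_inv, !lie_mul, !lie_vf_var, !lie_vf_lin by lia.
    cbn [reval]. rewrite !reval_linS.
    rewrite (S_step n a x (S c)) by lia. rewrite !Px_S. field; repeat split; auto.
  - destruct Hv as [Hv|[HMc Hv]]; [lia|].
    destruct (Nat.leb_spec (S (S c)) n).
    + unfold Rat in *. cbn [rdefined reval] in Hd. destruct Hd as [_ [_ Hd]].
      rewrite !lie_mul, lie_inv, !lie_vf_var by lia. cbn [reval].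
      rewrite !(S_beyond n a x M) by (auto; lia). rewrite Px_S, (Ha c) by lia. field; repeat split; auto.
    + destruct Hv as [Hv|Hv]; [lia|]. assert (c = n - 1)%nat by lia. subst c.
      destruct M as [|m]; [lia|]. destruct n as [|n']; [lia|].
      replace (S n' - 1)%nat with n' in * by lia. replace (S m - 1)%nat with m in * by lia.
      unfold Gx in *. replace (S n' - 1)%nat with n' in * by lia. replace (S m - 1)%nat with m in * by lia.
      cbn [rdefined reval] in Hd. destruct Hd as [_ [_ Hd]]. rewrite !reval_linS in Hd.
      pose proof (nz_l _ _ Hd). pose proof (nz_r _ _ Hd).
      rewrite !lie_mul, lie_inv, !lie_mul, !lie_vf_var, !lie_vf_lin by lia.
      cbn [reval]. rewrite !reval_linS.
      rewrite (S_ge (S n') a x (S n')) by lia.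
      pose proof (PS (S n') a x (S m) ltac:(lia)) as HP.
      assert (HQ : Px a x (S n') = Px a x n') by (rewrite Px_S, (Ha n') by lia; ring).
      rewrite HQ in HP. rewrite <- HP. field; repeat split; auto.

Qed.

Lemma EU_col n a M x c : (M < n)%nat ->
  valid n M c -> rdefined (Fcol n a M c) x -> lie n x (Fcol n a M c) x = 0.
Proof.
  intros HMn [Hc Hv] Hd. unfold Fcol in *.
  destruct (Nat.leb_spec (S (S c)) M).
  - unfold Up in *. cbn [rdefined reval] in Hd. destruct Hd as [_ [_ Hd]]. rewrite !reval_linS in Hd.
    pose proof (nz_l _ _ Hd). pose proof (nz_r _ _ Hd).
    rewrite !lie_mul, lie_inv, !lie_mul, !lie_x_var, !lie_x_lin by lia.
    cbn [reval]. rewrite !reval_linS. field; repeat split; auto.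
  - destruct Hv as [Hv|[HMc Hv]]; [lia|].
    destruct (Nat.leb_spec (S (S c)) n).
    + unfold Rat in *. cbn [rdefined reval] in Hd. destruct Hd as [_ [_ Hd]].
      rewrite !lie_mul, lie_inv, !lie_x_var by lia. cbn [reval]. field; repeat split; auto.
    + destruct Hv as [Hv|Hv]; [lia|].
      unfold Gx in *. cbn [rdefined reval] in Hd. destruct Hd as [_ [_ Hd]]. rewrite !reval_linS in Hd.
      pose proof (nz_l _ _ Hd). pose proof (nz_r _ _ Hd).
      rewrite !lie_mul, lie_inv, !lie_mul, !lie_x_var, !lie_x_lin by lia.
      cbn [reval]. rewrite !reval_linS. field; repeat split; auto.
Qed.

Lemma TRI_col n a M x c j : (M < n)%nat -> (forall l, (M < l < n)%nat -> a l = 0) ->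
  valid n M c -> valid n M j -> (j < c)%nat -> lie n (ej j) (Fcol n a M c) x = 0.
Proof.
  intros HMn Ha [Hc Hv] [Hj Hjv] Hjc. unfold Fcol.
  destruct (Nat.leb_spec (S (S c)) M).
  - unfold Up. rewrite !lie_mul, lie_inv, !lie_mul, !lie_ej_var, !lie_ej_lin by lia.
    dec; ring.
  - destruct Hv as [Hv|[HMc Hv]]; [lia|].
    destruct (Nat.leb_spec (S (S c)) n).
    + unfold Rat. rewrite !lie_mul, lie_inv, !lie_ej_var by lia. dec; ring.
    + destruct Hv as [Hv|Hv]; [lia|].
      unfold Gx. rewrite !lie_mul, lie_inv, !lie_mul, !lie_ej_var, !lie_ej_lin by lia.
      dec; try ring; rewrite (Ha j) by lia; ring.
Qed.

Definition Uset n a M x := (forall i, (i < n)%nat -> x i <> 0) /\ (forall j, (j < S M)%nat -> Sx n a x j <> 0).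

Lemma DIAG_col n a M x c : (M < n)%nat -> (forall l, (M < l < n)%nat -> a l = 0) ->
  valid n M c -> Uset n a M x -> rdefined (Fcol n a M c) x /\ lie n (ej c) (Fcol n a M c) x <> 0.
Proof.
  intros HMn Ha [Hc Hv] [HU1 HU2]. unfold Fcol.
  destruct (Nat.leb_spec (S (S c)) M).
  - unfold Up. cbn [rdefined reval]. rewrite !reval_linS.
    pose proof (HU2 c ltac:(lia)). pose proof (HU2 (S c) ltac:(lia)). pose proof (HU2 (S (S c)) ltac:(lia)).
    pose proof (HU1 (S c) ltac:(lia)).
    split. { repeat split; auto using rdefined_lin; try (apply Rmult_integral_contrapositive; auto). }
    rewrite !lie_mul, lie_inv, !lie_mul, !lie_ej_var, !lie_ej_lin by lia.
    cbn [reval]. rewrite !reval_linS. dec.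
    match goal with |- ?E <> 0 => replace E with
      (Sx n a x (S (S c)) * Sx n a x (S c) * / (Sx n a x c * Sx n a x c * x (S c))) end.
    + repeat (apply mult_nz || apply Rinv_neq_0_compat); auto.
    + rewrite (S_step n a x c) in H0 |- * by lia. field. repeat split; auto.
  - destruct Hv as [Hv|[HMc Hv]]; [lia|].
    destruct (Nat.leb_spec (S (S c)) n).
    + unfold Rat. cbn [rdefined reval]. pose proof (HU1 (S c) ltac:(lia)).
      split; [repeat split; auto|].
      rewrite !lie_mul, lie_inv, !lie_ej_var by lia. cbn [reval]. dec.
      match goal with |- ?E <> 0 => replace E with (/ x (S c)) by (field; auto) end.
      apply Rinv_neq_0_compat; auto.
    + destruct Hv as [Hv|Hv]; [lia|]. assert (c = n - 1)%nat by lia. subst c.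
      unfold Gx. cbn [rdefined reval]. rewrite !reval_linS.
      pose proof (HU2 (M-1)%nat ltac:(lia)). pose proof (HU2 M ltac:(lia)). pose proof (HU1 (M-1)%nat ltac:(lia)).
      split. { repeat split; auto using rdefined_lin; try (apply Rmult_integral_contrapositive; auto). }
      rewrite !lie_mul, lie_inv, !lie_mul, !lie_ej_var, !lie_ej_lin by lia.
      cbn [reval]. rewrite !reval_linS. dec. rewrite (Ha (n-1)%nat) by lia.
      match goal with |- ?E <> 0 => replace E with
        (x (M-1)%nat * / (Sx n a x (M-1)%nat * Sx n a x M)) by (field; auto) end.
      repeat (apply mult_nz || apply Rinv_neq_0_compat); auto.
Qed.

Lemma RV_col n a M c : (M < n)%nat -> valid n M c -> rvars_lt n (Fcol n a M c).
Proof.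
  intros HMn [Hc Hv]. unfold Fcol, Up, Rat, Gx.
  dec; cbn [rvars_lt]; repeat split; try apply rvars_lin; lia.
Qed.

Lemma open_and n (U V : (nat -> R) -> Prop) : open_n n U -> open_n n V -> open_n n (fun x => U x /\ V x).
Proof.
  intros HU HV x [Ux Vx]. destruct (HU x Ux) as [e1 [He1 H1]]. destruct (HV x Vx) as [e2 [He2 H2]].
  exists (Rmin e1 e2). split; [apply Rmin_pos; auto|]. intros y Hy. split.
  - apply H1. intros i Hi. eapply Rlt_le_trans; [apply Hy; auto|apply Rmin_l].
  - apply H2. intros i Hi. eapply Rlt_le_trans; [apply Hy; auto|apply Rmin_r].
Qed.

Lemma dense_and n (U V : (nat -> R) -> Prop) : open_n n U -> dense_n n U -> dense_n n V -> dense_n n (fun x => U x /\ V x).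
Proof.
  intros HUo HU HV x eps He. destruct (HU x (eps/2)) as [y [Uy Hy]]; [lra|].
  destruct (HUo y Uy) as [d [Hd Hd2]].
  destruct (HV y (Rmin d (eps/2))) as [z [Vz Hz]]; [apply Rmin_pos; lra|].
  exists z. split; [split|]; auto.
  - apply Hd2. intros i Hi. eapply Rlt_le_trans; [apply Hz; auto|apply Rmin_l].
  - intros i Hi. specialize (Hy i Hi). specialize (Hz i Hi).
    assert (Rabs (z i - y i) < eps/2) by (eapply Rlt_le_trans; [apply Hz|apply Rmin_r]).
    replace (z i - x i) with ((z i - y i) + (y i - x i)) by ring.
    eapply Rle_lt_trans; [apply Rabs_triang|]. lra.
Qed.

Lemma open_forall n K (P : nat -> (nat -> R) -> Prop) :
  (forall q, (q < K)%nat -> open_n n (P q)) -> open_n n (fun x => forall q, (q < K)%nat -> P q x).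
Proof.
  induction K; intros H.
  - intros x _. exists 1. split; [lra|]. intros; lia.
  - pose proof (open_and n _ _ (IHK (fun q Hq => H q ltac:(lia))) (H K ltac:(lia))) as Ho.
    intros x Hx. destruct (Ho x) as [e [He Hy]]; [split; auto|]. exists e; split; auto.
    intros y Hy' q Hq. destruct (Hy y Hy') as [A B]. destruct (Nat.eq_dec q K); [subst; auto|apply A; lia].
Qed.

Lemma dense_forall n K (P : nat -> (nat -> R) -> Prop) :
  (forall q, (q < K)%nat -> open_n n (P q)) -> (forall q, (q < K)%nat -> dense_n n (P q)) ->
  dense_n n (fun x => forall q, (q < K)%nat -> P q x).
Proof.
  induction K; intros Ho Hd.
  - intros x eps He. exists x. split; [intros; lia|]. intros. rewrite Rminus_diag, Rabs_R0; auto.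
  - pose proof (dense_and n _ _ (open_forall n K P (fun q Hq => Ho q ltac:(lia)))
       (IHK (fun q Hq => Ho q ltac:(lia)) (fun q Hq => Hd q ltac:(lia))) (Hd K ltac:(lia))) as HD.
    intros x eps He. destruct (HD x eps He) as [y [[A B] Hy]]. exists y; split; auto.
    intros q Hq. destruct (Nat.eq_dec q K); [subst; auto|apply A; lia].
Qed.

Lemma open_nz n i : (i < n)%nat -> open_n n (fun x => x i <> 0).
Proof.
  intros Hi x Hx. exists (Rabs (x i)). split; [apply Rabs_pos_lt; auto|].
  intros y Hy E. specialize (Hy i Hi). rewrite E, Rminus_0_l, Rabs_Ropp in Hy. lra.
Qed.

Lemma dense_nz n i : dense_n n (fun x => x i <> 0).
Proof.
  intros x eps He. destruct (Req_dec_T (x i) 0) as [E|E].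
  - exists (upd x i (eps/2)). unfold upd. rewrite Nat.eqb_refl. split; [lra|].
    intros l Hl. destruct (Nat.eqb_spec l i).
    + subst. rewrite E, Rminus_0_r, Rabs_right; lra.
    + rewrite Rminus_diag, Rabs_R0; auto.
  - exists x. split; auto. intros. rewrite Rminus_diag, Rabs_R0; auto.
Qed.

Lemma S_diff n a x y j eps : 0 <= eps -> (forall l, (l < n)%nat -> Rabs (y l - x l) < eps) ->
  Rabs (Sx n a y j - Sx n a x j) <= sum_upto n (fun l => Rabs (a l)) * eps.
Proof.
  intros He H. unfold Sx. induction n; cbn [sum_upto].
  - rewrite Rminus_diag, Rabs_R0. lra.
  - assert (IH := IHn (fun l Hl => H l ltac:(lia))).
    replace (sum_upto n (fun l => if Nat.leb j l then a l * y l else 0) + (if Nat.leb j n then a n * y n else 0) -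
      (sum_upto n (fun l => if Nat.leb j l then a l * x l else 0) + (if Nat.leb j n then a n * x n else 0)))
    with ((sum_upto n (fun l => if Nat.leb j l then a l * y l else 0) - sum_upto n (fun l => if Nat.leb j l then a l * x l else 0))
       + (if Nat.leb j n then a n * (y n - x n) else 0)) by (destruct (Nat.leb j n); ring).
    eapply Rle_trans; [apply Rabs_triang|]. rewrite Rmult_plus_distr_r.
    apply Rplus_le_compat; auto.
    destruct (Nat.leb j n).
    + rewrite Rabs_mult. apply Rmult_le_compat_l; [apply Rabs_pos|]. left; apply H; lia.
    + rewrite Rabs_R0. apply Rmult_le_pos; [apply Rabs_pos|auto].
Qed.

Lemma sumabs_nonneg n a : 0 <= sum_upto n (fun l => Rabs (a l)).
Proof. induction n; cbn [sum_upto]; [lra|]. pose proof (Rabs_pos (a n)); lra. Qed.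

Lemma open_S n a j : open_n n (fun x => Sx n a x j <> 0).
Proof.
  intros x Hx. set (K := sum_upto n (fun l => Rabs (a l))). pose proof (sumabs_nonneg n a) as HK. fold K in HK.
  assert (Hp : 0 < Rabs (Sx n a x j)) by (apply Rabs_pos_lt; auto).
  exists (Rabs (Sx n a x j) / (K + 1)). split; [apply Rdiv_lt_0_compat; lra|].
  intros y Hy E. assert (He0 : 0 <= Rabs (Sx n a x j) / (K + 1)) by (left; apply Rdiv_lt_0_compat; lra).
  pose proof (S_diff n a x y j _ He0 Hy) as D.
  fold K in D. rewrite E, Rminus_0_l, Rabs_Ropp in D.
  assert (K * (Rabs (Sx n a x j) / (K + 1)) < Rabs (Sx n a x j)).
  { assert (Hq : 0 < Rabs (Sx n a x j) / (K + 1)) by (apply Rdiv_lt_0_compat; lra).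
    replace (K * (Rabs (Sx n a x j) / (K + 1))) with (Rabs (Sx n a x j) - Rabs (Sx n a x j) / (K + 1)) by (field; lra).
    lra. }
  lra.
Qed.

Lemma Sx_upd n a x M t j : (j <= M)%nat -> (M < n)%nat -> Sx n a (upd x M t) j = Sx n a x j + a M * (t - x M).
Proof.
  intros HjM HMn. unfold Sx.
  assert (forall m, sum_upto m (fun l => if Nat.leb j l then a l * upd x M t l else 0) =
     sum_upto m (fun l => if Nat.leb j l then a l * x l else 0) + (if Nat.ltb M m then a M * (t - x M) else 0)) as G.
  { induction m; cbn [sum_upto]; [destruct (Nat.ltb_spec M 0); [lia|ring]|]. rewrite IHm. unfold upd.
    destruct (Nat.eqb_spec m M); destruct (Nat.ltb_spec M m); destruct (Nat.ltb_spec M (S m));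
    destruct (Nat.leb_spec j m); try lia; subst; ring. }
  rewrite G. destruct (Nat.ltb_spec M n); [ring|lia].
Qed.

Lemma dense_S n a M j : (j <= M)%nat -> (M < n)%nat -> a M <> 0 -> dense_n n (fun x => Sx n a x j <> 0).
Proof.
  intros HjM HMn HaM x eps He. destruct (Req_dec_T (Sx n a x j) 0) as [E|E].
  - exists (upd x M (x M + eps/2)). rewrite Sx_upd by auto. rewrite E. split.
    + replace (0 + a M * (x M + eps / 2 - x M)) with (a M * (eps/2)) by ring. apply Rmult_integral_contrapositive; split; auto; lra.
    + intros l Hl. unfold upd. destruct (Nat.eqb_spec l M).
      * subst. replace (x M + eps / 2 - x M) with (eps/2) by ring. rewrite Rabs_right; lra.
      * rewrite Rminus_diag, Rabs_R0; auto.
  - exists x. split; auto. intros. rewrite Rminus_diag, Rabs_R0; auto.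
Qed.

Definition col M k := if Nat.leb (S (S k)) M then k else if Nat.eqb M 0 then S k else S (S k).
Definition Fam n a M k := match k with O => Hx n a | S k' => Fcol n a M (col M k') end.

Lemma col_valid n M k : (M < n)%nat -> (S (S k) < n)%nat -> valid n M (col M k).
Proof. intros. unfold col, valid. dec. Qed.

Lemma col_mono M j k : (j < k)%nat -> (col M j < col M k)%nat.
Proof. intros. unfold col. dec. Qed.

Lemma exists_max n (a : nat -> R) : (exists i, (i < n)%nat /\ a i <> 0) ->
  exists M, (M < n)%nat /\ a M <> 0 /\ forall l, (M < l < n)%nat -> a l = 0.
Proof.
  induction n; intros [i [Hi Ha]]; [lia|].
  destruct (Req_dec_T (a n) 0) as [E|E].
  - destruct IHn as [M [H1 [H2 H3]]].
    + exists i; split; auto. destruct (Nat.eq_dec i n); [subst; contradiction|lia].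
    + exists M; repeat split; auto. intros l Hl. destruct (Nat.eq_dec l n); [subst; auto|apply H3; lia].
  - exists n; repeat split; auto. intros; lia.
Qed.

Theorem theorem2p5 (n : nat) (a : nat -> R) :
  (1 <= n)%nat ->
  (exists i, (i < n)%nat /\ a i <> 0) ->
  exists F : nat -> rexpr,
    (forall k, (k < n - 1)%nat -> rvars_lt n (F k) /\ first_integral n a (F k)) /\
    functionally_independent n (n - 1) F.
Proof.
  intros Hn Hex. destruct (exists_max n a Hex) as [M [HMn [HaM HaZ]]].
  exists (Fam n a M). split.
  - intros k Hk. destruct k as [|k'].
    + split; [apply rvars_lin; lia|]. intros x _. exists (fun i => reval (rder i (Hx n a)) x).
      split; [intros; apply rder_ok, rdefined_lin|].
      change (lie n (vf n a x) (Hx n a) x = 0). unfold Hx. rewrite lie_vf_lin. unfold Px; simpl; ring.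
    + assert (Hv : valid n M (col M k')) by (apply col_valid; lia).
      split; [apply RV_col; auto|]. intros x Hd. exists (fun i => reval (rder i (Fam n a M (S k'))) x).
      split; [intros; apply rder_ok; auto|].
      change (lie n (vf n a x) (Fcol n a M (col M k')) x = 0). apply FI_col; auto.
  - exists (Uset n a M). split; [|split].
    + unfold Uset. apply (open_and n (fun x => forall i, (i < n)%nat -> x i <> 0) (fun x => forall j, (j < S M)%nat -> Sx n a x j <> 0)).
      * apply (open_forall n n (fun i x => x i <> 0)). intros; apply open_nz; auto.
      * apply (open_forall n (S M) (fun j x => Sx n a x j <> 0)). intros; apply open_S.
    + unfold Uset. apply (dense_and n (fun x => forall i, (i < n)%nat -> x i <> 0) (fun x => forall j, (j < S M)%nat -> Sx n a x j <> 0)).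
      * apply (open_forall n n (fun i x => x i <> 0)). intros; apply open_nz; auto.
      * apply (dense_forall n n (fun i x => x i <> 0)); intros; [apply open_nz; auto|apply dense_nz].
      * apply (dense_forall n (S M) (fun j x => Sx n a x j <> 0)); intros; [apply open_S|apply (dense_S n a M); auto; lia].
    + intros x HU.
      assert (Hdef : forall k, (k < n - 1)%nat -> rdefined (Fam n a M k) x).
      { intros [|k'] Hk; [apply rdefined_lin|]. apply (DIAG_col n a M x (col M k')); auto. apply col_valid; lia. }
      split; auto.
      exists (fun k i => reval (rder i (Fam n a M k)) x). split.
      { intros k i Hk Hi. apply rder_ok; auto. }
      intros c Hc.
      destruct (Nat.eq_dec n 1) as [E|Hn2]; [intros; lia|].
      destruct HU as [HU1 HU2].
      assert (Hc0 : c O = 0).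
      { assert (Z : sum_upto n (fun i => sum_upto (n - 1) (fun k => c k * reval (rder i (Fam n a M k)) x) * x i) = 0).
        { apply sum_zero; intros i Hi; rewrite Hc; auto; ring. }
        assert (Z2 : sum_upto n (fun i => sum_upto (n - 1) (fun k => c k * (reval (rder i (Fam n a M k)) x * x i))) = 0).
        { rewrite <- Z. apply sum_ext; intros i Hi. rewrite Rmult_comm, <- sum_scal. apply sum_ext; intros; ring. }
        rewrite sum_swap in Z2.
        assert (Z3 : sum_upto (n - 1) (fun k => c k * lie n x (Fam n a M k) x) = 0).
        { rewrite <- Z2. apply sum_ext; intros k Hk. unfold lie. rewrite sum_scal; auto. }
        rewrite (sum_single _ _ O) in Z3; [|lia|].
        - simpl in Z3. unfold Hx in Z3. rewrite lie_x_lin in Z3.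
          pose proof (HU2 O ltac:(lia)). apply Rmult_integral in Z3. destruct Z3; auto; contradiction.
        - intros [|k'] Hk Hne; [lia|]. simpl. rewrite EU_col; [ring|auto|apply col_valid; lia|].
          apply (Hdef (S k')); auto. }
      assert (Hcs : forall k, (S (S k) < n)%nat -> c (S k) = 0).
      { intros k. induction k as [k IH] using (well_founded_induction Wf_nat.lt_wf). intros Hk.
        assert (Hvk : valid n M (col M k)) by (apply col_valid; lia).
        pose proof (Hc (col M k) ltac:(destruct Hvk; auto)) as Hs.
        rewrite (sum_single _ _ (S k)) in Hs; [|lia|].
        - destruct (DIAG_col n a M x (col M k) HMn HaZ Hvk (conj HU1 HU2)) as [_ Hnz].
          rewrite lie_ej in Hnz by (destruct Hvk; auto).
          apply Rmult_integral in Hs. destruct Hs; auto. simpl in H. contradiction.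
        - intros [|k'] Hk' Hne; [rewrite Hc0; ring|].
          destruct (Nat.lt_ge_cases k' k).
          + rewrite IH; auto; [ring|lia].
          + simpl. rewrite <- (lie_ej n _ x (col M k)) by (destruct Hvk; auto).
            rewrite (TRI_col n a M x (col M k') (col M k)); auto; [ring|apply col_valid; lia|apply col_mono; lia]. }
      intros [|k] Hk; auto. apply Hcs. lia.
Qed.
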